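(* Let $H=\Bbbk^G{}^\tau\#_\sigma\Bbbk F$ be the Hopf algebra described in the context and for $f\in F$ let $C_f=\mathrm{span}\{p_g\#(g'\triangleright f)\mid g,g'\in G\}$. (1) For every $f\in F$, $C_f$ is a cosemisimple subcoalgebra of $H$; moreover $C_{1_F}$ is a (cosemisimple) Hopf subalgebra of $H$ and $C_{1_F}\cong\Bbbk^G$ as Hopf algebras via $p_g\#1_F\mapsto p_g$. (2) If $G_f=\{1_G\}$, then $C_f$ is a simple subcoalgebra of $H$, and in this case $S(C_f)=C_f$ if and only if $G_{f,f^{-1}}\neq\emptyset$.
   Context: Standing setup: $\Bbbk$ is an algebraically closed field of characteristic $0$, $F$ a group (possibly infinite), $G$ a finite group, and $(F,G,\triangleleft,\triangleright)$ a matched pair: $\triangleright:G\times F\to F$ a left action of $G$ on the set $F$, $\triangleleft:G\times F\to G$ a right action of $F$ on the set $G$, with $g\triangleright(ff')=(g\triangleright f)((g\triangleleft f)\triangleright f')$ and $(gg')\triangleleft f=(g\triangleleft(g'\triangleright f))(g'\triangleleft f)$. Maps $\sigma:G\times F\times F\to\Bbbk^\times$, $(g,f,f')\mapsto\sigma(g;f,f')$, and $\tau:G\times G\times F\to\Bbbk^\times$, $(g,g',f)\mapsto\tau(g,g';f)$, satisfy: $\sigma(g;1_F,f)=\sigma(g;f,1_F)=\sigma(1_G;f,f')=1$; $\sigma(g\triangleleft f;f',f'')\sigma(g;f,f'f'')=\sigma(g;f,f')\sigma(g;ff',f'')$; $\tau(1_G,g;f)=\tau(g,1_G;f)=\tau(g,g';1_F)=1$;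 $\tau(g,g';g''\triangleright f)\tau(gg',g'';f)=\tau(g,g'g'';f)\tau(g',g'';f)$; and $\sigma(gg';f,f')\tau(g,g';ff')=\sigma(g;g'\triangleright f,(g'\triangleleft f)\triangleright f')\sigma(g';f,f')\tau(g,g';f)\tau(g\triangleleft(g'\triangleright f),g'\triangleleft f;f')$. $H$ has basis $\{p_g\#f\}$ ($\{p_g\}$ the dual basis of $\Bbbk^G$), unit $\sum_g p_g\#1_F$, product $(p_g\#f)(p_{g'}\#f')=\delta_{g\triangleleft f,g'}\sigma(g;f,f')p_g\#ff'$, coproduct $\Delta(p_g\#f)=\sum_{x\in G}\tau(gx^{-1},x;f)\,p_{gx^{-1}}\#(x\triangleright f)\otimes p_x\#f$, counit $\varepsilon(p_g\#f)=\delta_{g,1_G}$, antipode $S(p_g\#f)=\sigma(g^{-1};g\triangleright f,(g\triangleright f)^{-1})^{-1}\tau(g^{-1},g;f)^{-1}p_{(g\triangleleft f)^{-1}}\#(g\triangleright f)^{-1}$. Notation: $G_f=\{g\in G\mid g\triangleright f=f\}$ and $G_{f,f^{-1}}=\{g\in G\mid g\triangleright f=f^{-1}\}$. *)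

(* Defs.v *)
From HB Require Import structures.
From mathcomp Require Import all_boot all_order all_algebra all_fingroup.
From mathcomp Require Import boolp classical_sets fsbigop cardinality.
Unset Implicit Arguments.
Import Order.TTheory GRing.Theory.
Local Open Scope classical_set_scope.
Local Open Scope ring_scope.

Section LinAlg.
Variable K : fieldType.

Definition finsupp (T : Type) (v : T -> K) : Prop := finite_set [set x | v x != 0].

Definition span (T : Type) (S : set (T -> K)) : set (T -> K) :=
  [set v | exists (n : nat) (c : 'I_n -> K) (w : 'I_n -> T -> K),
      (forall i, S (w i)) /\ v = (fun z => \sum_(i < n) c i * w i z)].

(* elementary tensor a (x) b, as a function on pairs of basis indices *)
Definition tens (A B : Type) (a : A -> K) (b : B -> K) : (A * B)%type -> K :=
  fun z => a z.1 * b z.2.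

Definition tensC (A : Type) (C : set (A -> K)) : set ((A * A)%type -> K) :=
  span (A * A)%type [set t | exists a b, C a /\ C b /\ t = tens A A a b].

Definition dvec (T : eqType) (t : T) : T -> K := fun x => if x == t then 1 else 0.
End LinAlg.
Arguments finsupp {K T}.
Arguments span {K T}.
Arguments tens {K A B}.
Arguments tensC {K A}.
Arguments dvec {K T}.

Section Bicrossed.
Variables (K : fieldType) (G : finGroupType) (F : groupType).
Variables (tr : G -> F -> F) (tl : G -> F -> G).
Variables (sigma : G -> F -> F -> K) (tau : G -> G -> F -> K).

(* An element of H is a finitely supported function G * F -> K, i.e.
   h = \sum h(g,f) p_g # f.  The basis vector p_g # f : *)
Definition pb (g : G) (f : F) : (G * F)%type -> K := dvec (g, f).

Definition linext (W : Type) (B : (G * F)%type -> W -> K) (h : (G * F)%type -> K) : W -> K :=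
  fun w => \sum_(x \in [set: (G * F)%type]) h x * B x w.

(* (p_g#f)(p_g'#f') = delta_{g<|f, g'} sigma(g;f,f') p_g # ff' *)
Definition mulB (x y : (G * F)%type) : (G * F)%type -> K :=
  fun z => if tl x.1 x.2 == y.1 then sigma x.1 x.2 y.2 * pb x.1 (x.2 * y.2)%g z else 0.

Definition mulH (h h' : (G * F)%type -> K) : (G * F)%type -> K :=
  fun z => \sum_(x \in [set: (G * F)%type]) \sum_(y \in [set: (G * F)%type])
             h x * h' y * mulB x y z.

Definition unitH : (G * F)%type -> K := fun z => \sum_(g : G) pb g 1%g z.

(* Delta(p_g#f) = \sum_x tau(gx^-1,x;f) p_{gx^-1}#(x|>f) (x) p_x#f *)
Definition DeltaB (x : (G * F)%type) : ((G * F) * (G * F))%type -> K :=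
  fun z => \sum_(t : G) tau (x.1 * t^-1)%g t x.2 *
                        tens (pb (x.1 * t^-1)%g (tr t x.2)) (pb t x.2) z.

Definition DeltaH (h : (G * F)%type -> K) := linext ((G * F) * (G * F))%type DeltaB h.

Definition epsH (h : (G * F)%type -> K) : K :=
  \sum_(x \in [set: (G * F)%type]) h x * (if x.1 == 1%g then 1 else 0).

(* S(p_g#f) = sigma(g^-1; g|>f, (g|>f)^-1)^-1 tau(g^-1,g;f)^-1 p_{(g<|f)^-1}#(g|>f)^-1 *)
Definition SB (x : (G * F)%type) : (G * F)%type -> K :=
  fun z => (sigma (x.1)^-1%g (tr x.1 x.2) (tr x.1 x.2)^-1%g)^-1 * (tau (x.1)^-1%g x.1 x.2)^-1
           * pb (tl x.1 x.2)^-1%g (tr x.1 x.2)^-1%g z.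

Definition SH (h : (G * F)%type -> K) := linext (G * F)%type SB h.

Definition subcoalg (C : set ((G * F)%type -> K)) : Prop :=
  (forall h, C h -> finsupp h) /\ span C `<=` C /\
  (forall h, C h -> tensC C (DeltaH h)).

Definition simple_subcoalg (D : set ((G * F)%type -> K)) : Prop :=
  subcoalg D /\ (exists h, D h /\ h <> (fun _ => 0)) /\
  (forall E, subcoalg E -> E `<=` D -> E = [set (fun _ => 0)] \/ E = D).

(* cosemisimple subcoalgebra: equal to its coradical, i.e. to the sum of its
   simple subcoalgebras *)
Definition cosemisimple_subcoalg (C : set ((G * F)%type -> K)) : Prop :=
  subcoalg C /\
  C `<=` span [set h | exists D, simple_subcoalg D /\ D `<=` C /\ D h].

Definition hopf_subalg (C : set ((G * F)%type -> K)) : Prop :=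
  subcoalg C /\ C unitH /\ (forall a b, C a -> C b -> C (mulH a b)) /\
  (forall a, C a -> C (SH a)).

Definition Cf (f : F) : set ((G * F)%type -> K) :=
  span [set v | exists g g' : G, v = pb g (tr g' f)].

Definition pG (g : G) : G -> K := dvec g.
Definition kG_mul (a b : G -> K) : G -> K := fun x => a x * b x.
Definition kG_unit : G -> K := fun _ => 1.
(* Delta(p_g) = \sum_x p_{gx^-1} (x) p_x, i.e. Delta(a)(u,v) = a(uv) *)
Definition kG_Delta (a : G -> K) : (G * G)%type -> K :=
  fun z => \sum_(g : G) a g * \sum_(t : G) tens (pG (g * t^-1)%g) (pG t) z.
Definition kG_eps (a : G -> K) : K := a 1%g.
Definition kG_S (a : G -> K) : G -> K := fun z => \sum_(g : G) a g * pG (g^-1)%g z.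

Definition phi1 (h : (G * F)%type -> K) : G -> K := fun g => h (g, 1%g).
Definition phi1_tens (t : ((G * F) * (G * F))%type -> K) : (G * G)%type -> K :=
  fun z => t ((z.1, 1%g), (z.2, 1%g)).

Definition hopf_iso_kG : Prop :=
  (forall g, phi1 (pb g 1%g) = pG g) /\
  (forall a b, Cf 1%g a -> Cf 1%g b -> phi1 a = phi1 b -> a = b) /\
  (forall c : G -> K, exists a, Cf 1%g a /\ phi1 a = c) /\
  (forall a b (k : K), Cf 1%g a -> Cf 1%g b ->
      phi1 (fun z => k * a z + b z) = (fun g => k * phi1 a g + phi1 b g)) /\
  (forall a b, Cf 1%g a -> Cf 1%g b -> phi1 (mulH a b) = kG_mul (phi1 a) (phi1 b)) /\
  phi1 unitH = kG_unit /\
  (forall a, Cf 1%g a -> kG_Delta (phi1 a) = phi1_tens (DeltaH a)) /\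
  (forall a, Cf 1%g a -> kG_eps (phi1 a) = epsH a) /\
  (forall a, Cf 1%g a -> kG_S (phi1 a) = phi1 (SH a)).

End Bicrossed.

(* Main.v *)
Require Import Defs.
From HB Require Import structures.
From mathcomp Require Import all_boot all_order all_algebra all_fingroup.
From mathcomp Require Import boolp classical_sets fsbigop cardinality.
From mathcomp Require Import zify ring.

Import GRing.Theory.
Local Open Scope classical_set_scope.
Local Open Scope ring_scope.

Set Implicit Arguments.
Unset Strict Implicit.
Section Gen.
Variables (K : fieldType) (T : Type).
Implicit Types (S E : set (T -> K)).

Definition closed S := Defs.span S `<=` S.

Lemma span_ord S n (c : 'I_n -> K) (w : 'I_n -> T -> K) :
  (forall i, S (w i)) -> Defs.span S (fun z => \sum_(i < n) c i * w i z).
Proof. by move=> Hw; exists n, c, w. Qed.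

Lemma span_list (X : eqType) S (r : seq X) (c : X -> K) (w : X -> T -> K) :
  (forall x, x \in r -> S (w x)) -> Defs.span S (fun z => \sum_(x <- r) c x * w x z).
Proof.
move=> Hw; case: r Hw => [|x0 r] Hw.
  by exists 0%N, (fun _ => 0), (fun _ _ => 0); split=> [[]//|]; apply: funext=> z; rewrite big_nil big_ord0.
exists (size (x0 :: r)), (fun i => c (nth x0 (x0 :: r) i)), (fun i => w (nth x0 (x0 :: r) i)).
split; first by move=> i; apply: Hw; apply: mem_nth.
apply: funext => z; rewrite (big_nth x0) big_mkord //.
Qed.

Lemma span_sub S : S `<=` Defs.span S.
Proof.
move=> h Sh; exists 1%N, (fun _ => 1), (fun _ => h); split=> //.
by apply: funext=> z; rewrite big_ord1 mul1r.
Qed.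

Lemma span0 S : Defs.span S (fun _ => 0).
Proof. by exists 0%N, (fun _ => 0), (fun _ _ => 0); split=> [[]//|]; apply: funext=> z; rewrite big_ord0. Qed.

Lemma span_mono S E : S `<=` E -> Defs.span S `<=` Defs.span E.
Proof. by move=> SE h [n [c [w [Hw ->]]]]; exists n, c, w; split=> // i; apply: SE. Qed.

Lemma span_add S u v : Defs.span S u -> Defs.span S v -> Defs.span S (fun z => u z + v z).
Proof.
move=> [n [c [w [Hw ->]]]] [m [d [x [Hx ->]]]].
exists (n + m)%N, (fun i => match split i with inl j => c j | inr j => d j end),
  (fun i => match split i with inl j => w j | inr j => x j end).
split; first by move=> i; case: (split i).
apply: funext => z; rewrite big_split_ord /=; congr (_ + _); apply: eq_bigr => i _.
  by rewrite (unsplitK (inl i)).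
by rewrite (unsplitK (inr i)).
Qed.

Lemma span_scale S (k : K) u : Defs.span S u -> Defs.span S (fun z => k * u z).
Proof.
move=> [n [c [w [Hw ->]]]]; exists n, (fun i => k * c i), w; split=> //.
by apply: funext=> z; rewrite mulr_sumr; apply: eq_bigr=> i _; rewrite mulrA.
Qed.

Lemma span_sum (X : eqType) S (r : seq X) (c : X -> K) (w : X -> T -> K) :
  (forall x, x \in r -> Defs.span S (w x)) -> Defs.span S (fun z => \sum_(x <- r) c x * w x z).
Proof.
elim: r => [|x r IH] Hw.
  rewrite (_ : (fun _ => _) = fun _ => 0); first exact: span0.
  by apply: funext=> z; rewrite big_nil.
rewrite (_ : (fun _ => _) = fun z => c x * w x z + \sum_(y <- r) c y * w y z); last by apply: funext=> z; rewrite big_cons.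
apply: span_add; first by apply: span_scale; apply: Hw; rewrite inE eqxx.
by apply: IH => y yr; apply: Hw; rewrite inE yr orbT.
Qed.

Lemma closed_sum (X : eqType) E (r : seq X) (c : X -> K) (w : X -> T -> K) :
  closed E -> (forall x, x \in r -> E (w x)) -> E (fun z => \sum_(x <- r) c x * w x z).
Proof. by move=> cE Hw; apply: cE; apply: span_list. Qed.

Lemma closed0 E : closed E -> E (fun _ => 0).
Proof. by move=> cE; apply: cE; apply: span0. Qed.

Lemma closed_add E u v : closed E -> E u -> E v -> E (fun z => u z + v z).
Proof. by move=> cE Eu Ev; apply: cE; apply: span_add; apply: span_sub. Qed.

Lemma closed_scale E k u : closed E -> E u -> E (fun z => k * u z).
Proof. by move=> cE Eu; apply: cE; apply: span_scale; apply: span_sub. Qed.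

Lemma closed_lin E k u v : closed E -> E u -> E v -> E (fun z => k * u z + v z).
Proof. by move=> cE Eu Ev; apply: closed_add => //; apply: closed_scale. Qed.

Lemma closed_span S : closed (Defs.span S).
Proof.
move=> h [n [c [w [Hw ->]]]].
have -> : (fun z => \sum_(i < n) c i * w i z) = (fun z => \sum_(i <- enum 'I_n) c i * w i z).
  by apply: funext=> z; rewrite big_enum.
by apply: span_sum => i _; apply: Hw.
Qed.

Lemma closed_sumW (X : eqType) E (r : seq X) (w : X -> T -> K) :
  closed E -> (forall x, x \in r -> E (w x)) -> E (fun z => \sum_(x <- r) w x z).
Proof.
move=> cE Hw; have := closed_sum (fun=> 1) cE Hw.
by rewrite (_ : (fun z => _) = (fun z => \sum_(x <- r) w x z)) //; apply: funext => z; under eq_bigr do rewrite mul1r.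
Qed.

Lemma closed_ord E n (c : 'I_n -> K) (w : 'I_n -> T -> K) :
  closed E -> (forall i, E (w i)) -> E (fun z => \sum_(i < n) c i * w i z).
Proof. by move=> cE Hw; apply: cE; apply: span_ord. Qed.

End Gen.

Section Slice.
Variables (K : fieldType) (A : Type).
Lemma tensC_slice2 (E : set (A -> K)) t a : closed E -> tensC E t -> E (fun b => t (a, b)).
Proof.
move=> cE [n [c [w [Hw ->]]]] /=.
have -> : (fun b => \sum_(i < n) c i * w i (a, b)) =
   (fun b => \sum_(i < n) c i * (fun b' => w i (a, b')) b) by [].
apply: closed_ord => // i; have [x [y [Ex [Ey ->]]]] := Hw i.
by rewrite /tens /=; apply: closed_scale.
Qed.
Lemma tensC_slice1 (E : set (A -> K)) t b : closed E -> tensC E t -> E (fun a => t (a, b)).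
Proof.
move=> cE [n [c [w [Hw ->]]]] /=.
have -> : (fun a => \sum_(i < n) c i * w i (a, b)) =
   (fun a => \sum_(i < n) c i * (fun a' => w i (a', b)) a) by [].
apply: closed_ord => // i; have [x [y [Ex [Ey ->]]]] := Hw i.
rewrite /tens /=; have -> : (fun a' => x a' * y b) = (fun a' => y b * x a').
  by apply: funext=> a'; rewrite mulrC.
exact: closed_scale.
Qed.
End Slice.
Arguments closed {K T}.
Section Bic.
Variables (K : fieldType) (G : finGroupType) (F : groupType).
Variables (tr : G -> F -> F) (tl : G -> F -> G).
Variables (sigma : G -> F -> F -> K) (tau : G -> G -> F -> K).
Hypothesis tr1 : forall f, tr 1%g f = f.
Hypothesis trM : forall g g' f, tr (g * g')%g f = tr g (tr g' f).
Hypothesis tl1 : forall g, tl g 1%g = g.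
Hypothesis tlM : forall g f f', tl g (f * f')%g = tl (tl g f) f'.
Hypothesis mp1 : forall g f f', tr g (f * f')%g = (tr g f * tr (tl g f) f')%g.
Hypothesis mp2 : forall g g' f, tl (g * g')%g f = (tl g (tr g' f) * tl g' f)%g.
Hypothesis sigma_nz : forall g f f', sigma g f f' != 0.
Hypothesis tau_nz : forall g g' f, tau g g' f != 0.
Hypothesis sigma_n : forall g f f', sigma g 1%g f = 1 /\ sigma g f 1%g = 1 /\ sigma 1%g f f' = 1.
Hypothesis tau_n : forall g g' f, tau 1%g g f = 1 /\ tau g 1%g f = 1 /\ tau g g' 1%g = 1.
Hypothesis tau_cocycle : forall g g' g'' f,
     tau g g' (tr g'' f) * tau (g * g')%g g'' f = tau g (g' * g'')%g f * tau g' g'' f.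

Lemma mulg_idem (M : groupType) (x : M) : x = (x * x)%g -> x = 1%g.
Proof. by move=> h; have := congr1 (mulg x^-1) h; rewrite mulVg mulKg. Qed.

Lemma trg1 g : tr g 1%g = 1%g.
Proof. by apply: mulg_idem; rewrite -{1}(mulg1 1%g) mp1 tl1. Qed.

Lemma tl1f f : tl 1%g f = 1%g.
Proof. by apply: mulg_idem; rewrite -{1}(mulg1 1%g) mp2 tr1. Qed.

Lemma trK g f : tr g^-1 (tr g f) = f.
Proof. by rewrite -trM mulVg tr1. Qed.

Lemma trKV g f : tr g (tr g^-1 f) = f.
Proof. by rewrite -trM mulgV tr1. Qed.

Lemma tr_inj g f f' : tr g f = tr g f' -> f = f'.
Proof. by move=> h; rewrite -(trK g f) h trK. Qed.

Lemma tr_inv g f : ((tr g f)^-1 = tr (tl g f) f^-1)%g.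
Proof.
by apply: mulg1_eq; rewrite -mp1 mulgV trg1.
Qed.

Lemma tl_inv g f : ((tl g f)^-1 = tl g^-1 (tr g f))%g.
Proof.
by apply: (mulIg (tl g f)); rewrite mulVg -mp2 mulVg tl1f.
Qed.


Local Notation T := (G * F)%type.
Local Notation pb := (pb K G F).
Local Notation Cf := (Cf K G F tr).

Lemma pbE g y z : pb g y z = (z == (g, y))%:R.
Proof. by rewrite /pb /dvec; case: eqP. Qed.

Definition Ol (f : F) : seq F := undup [seq tr g f | g <- enum G].

Lemma mem_Ol f y : (y \in Ol f) = [exists g, tr g f == y].
Proof.
rewrite mem_undup; apply/mapP/existsP => [[g _ ->]|[g /eqP <-]]; first by exists g.
by exists g; rewrite ?mem_enum.
Qed.

Lemma Ol_tr f g y : y \in Ol f -> tr g y \in Ol f.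
Proof. by rewrite !mem_Ol => /existsP[x /eqP <-]; apply/existsP; exists (g * x)%g; rewrite trM. Qed.

Lemma Ol_f f g : tr g f \in Ol f.
Proof. by rewrite mem_Ol; apply/existsP; exists g. Qed.

Lemma Ol_uniq f : uniq (Ol f).
Proof. exact: undup_uniq. Qed.

Definition Bl (f : F) : seq T := [seq (g, y) | g <- enum G, y <- Ol f].

Lemma mem_Bl f x : (x \in Bl f) = (x.2 \in Ol f).
Proof.
case: x => g y /=; apply/allpairsP/idP => [[[a b] /= [_ yb e]]|yO].
  by case: e => _ ->.
by exists (g, y); rewrite mem_enum.
Qed.

Lemma Bl_uniq f : uniq (Bl f).
Proof. by apply: allpairs_uniq => //; [exact: enum_uniq | exact: Ol_uniq | move=> [??] [??] _ _ []/= -> ->]. Qed.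

Lemma sum_pred1 (X : eqType) (r : seq X) (F0 : X -> K) z : uniq r ->
  \sum_(x <- r) F0 x * (z == x)%:R = if z \in r then F0 z else 0.
Proof.
move=> ur; case: ifP => zr.
  rewrite (bigD1_seq z) //= eqxx mulr1 big1 ?addr0 // => x /negPf.
  by rewrite eq_sym => ->; rewrite mulr0.
by rewrite big1_seq // => x /= xr; case: eqP => [e|]; [rewrite e xr in zr | rewrite mulr0].
Qed.

Lemma sum_pred1l (X : eqType) (r : seq X) (F0 : X -> K) z : uniq r ->
  \sum_(x <- r) (x == z)%:R * F0 x = (z \in r)%:R * F0 z.
Proof.
move=> ur; rewrite (eq_bigr (fun x => F0 x * (z == x)%:R)); last by move=> x _; rewrite mulrC eq_sym.
by rewrite sum_pred1 //; case: ifP; rewrite ?mul1r ?mul0r.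
Qed.

Lemma sum_pred1c (X : eqType) (r : seq X) (c : K) z : uniq r ->
  \sum_(x <- r) (x == z)%:R * c = (z \in r)%:R * c.
Proof. exact: (@sum_pred1l X r (fun _ => c) z). Qed.

Lemma CfE f h : Cf f h <-> (forall z, z.2 \notin Ol f -> h z = 0).
Proof.
split.
  move=> [n [c [w [Hw ->]]]] z zO; rewrite big1 // => i _.
  have [g [g' ->]] := Hw i; rewrite pbE; case: eqP => [e|]; last by rewrite mulr0.
  by move: zO; rewrite e /= Ol_f.
move=> H.
have -> : h = (fun z => \sum_(x <- Bl f) h x * pb x.1 x.2 z).
  apply: funext=> z; under eq_bigr do rewrite pbE -surjective_pairing.
  rewrite sum_pred1 ?Bl_uniq //; case: ifP => //; rewrite mem_Bl => /negbT; exact: H.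
apply: span_list => x; rewrite mem_Bl mem_Ol => /existsP[g' /eqP <-].
by exists x.1, g'.
Qed.

Lemma Cf_closed f : closed (Cf f).
Proof.
move=> h /= [n [c [w [Hw ->]]]]; apply/CfE => z zO; rewrite big1 // => i _.
by move/CfE: (Hw i) => ->; rewrite ?mulr0.
Qed.

Lemma Cf_finsupp f h : Cf f h -> finsupp h.
Proof.
move/CfE=> H; apply: (sub_finite_set (B := [set` Bl f])); last exact: finite_seq.
move=> z /= hz; rewrite mem_Bl; apply: contraT => /H.
by move/eqP: hz.
Qed.


Lemma fsbig_pt (X : choiceType) (F0 : X -> K) x0 :
  (forall x, x != x0 -> F0 x = 0) -> \sum_(x \in [set: X]) F0 x = F0 x0.
Proof.
move=> H; rewrite -(fsbig_widen [set x0] [set: X] F0) ?fsbig_set1 //.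
by move=> x [_ /= /eqP nx]; apply: H.
Qed.

Definition D0 (h : T -> K) (z : T * T) : K :=
  (z.1.2 == tr z.2.1 z.2.2)%:R * tau z.1.1 z.2.1 z.2.2 * h ((z.1.1 * z.2.1)%g, z.2.2).

Lemma DeltaBE x z : DeltaB K G F tr tau x z =
  ((x == ((z.1.1 * z.2.1)%g, z.2.2)) && (z.1.2 == tr z.2.1 z.2.2))%:R * tau z.1.1 z.2.1 z.2.2.
Proof.
case: z => [[a w] [b y]]; case: x => [g y'] /=; rewrite /DeltaB /= (bigD1 b) //= big1; last first.
  by move=> t tb; rewrite /tens !pbE /= !xpair_eqE [b == t]eq_sym (negPf tb) /= !mulr0.
rewrite addr0 /tens !pbE /= !xpair_eqE eqxx /=.
have [<-|ne] := eqVneq y' y; last first.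
  by rewrite !andbF /= !mulr0 mul0r.
rewrite andbT mulr1; have [->|ne2] := eqVneq g (a * b)%g.
  by rewrite mulgK eqxx /= mulrC.
have -> : (a == g * b^-1)%g = false.
  by apply/negbTE; apply: contra ne2 => /eqP ->; rewrite mulgKV.
by rewrite /= mulr0 mul0r.
Qed.

Lemma DeltaHE h : DeltaH K G F tr tau h = D0 h.
Proof.
apply: funext => z; rewrite /DeltaH /linext (@fsbig_pt _ _ ((z.1.1 * z.2.1)%g, z.2.2)).
  by rewrite DeltaBE eqxx /= /D0; case: (_ == _); rewrite /= ?mul1r ?mulr1 ?mul0r ?mulr0 // mulrC.
by move=> x nx; rewrite DeltaBE (negPf nx) /= mul0r mulr0.
Qed.

Definition bmap (x : T) : T := ((tl x.1 x.2)^-1%g, (tr x.1 x.2)^-1%g).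
Definition binv (z : T) : T := ((tl z.1 z.2)^-1%g, tr (tl z.1 z.2) (z.2)^-1%g).

Lemma bmapK : cancel bmap binv.
Proof.
case=> g f; rewrite /bmap /binv /=; congr (_, _).
  by rewrite [(tl g f)^-1%g]tl_inv -tlM mulgV tl1 invgK.
by rewrite [(tl g f)^-1%g]tl_inv -tlM mulgV tl1 invgK trK.
Qed.

Lemma binvK : cancel binv bmap.
Proof.
case=> g f; rewrite /bmap /binv /=; congr (_, _).
  by rewrite -tl_inv invgK -tlM mulgV tl1.
by rewrite trK invgK.
Qed.

Definition cS (x : T) : K :=
  (sigma (x.1)^-1%g (tr x.1 x.2) (tr x.1 x.2)^-1%g)^-1 * (tau (x.1)^-1%g x.1 x.2)^-1.

Lemma cS_nz x : cS x != 0.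
Proof. by rewrite /cS mulf_eq0 !invr_eq0 negb_or sigma_nz tau_nz. Qed.

Lemma SHE h : SH K G F tr tl sigma tau h = fun z => cS (binv z) * h (binv z).
Proof.
apply: funext => z; rewrite /SH /linext (@fsbig_pt _ _ (binv z)).
  by rewrite /SB pbE -[((tl _ _)^-1%g, _)]/(bmap (binv z)) binvK eqxx mulr1 mulrC.
move=> x nx; rewrite /SB pbE -[((tl _ _)^-1%g, _)]/(bmap x).
have -> : (z == bmap x) = false.
  by apply/negbTE; apply: contra nx => /eqP ->; rewrite bmapK.
by rewrite !mulr0.
Qed.

Lemma pb_Cf f x : x.2 \in Ol f -> Cf f (pb x.1 x.2).
Proof.
move=> xO; apply/CfE => z zO; rewrite pbE; case: eqP => // e.
by rewrite e /= xO in zO.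
Qed.

Lemma Cf_expand f k : Cf f k -> k = (fun z => \sum_(x <- Bl f) k x * pb x.1 x.2 z).
Proof.
move/CfE=> H; apply: funext=> z; under eq_bigr do rewrite pbE -surjective_pairing.
rewrite sum_pred1 ?Bl_uniq //; case: ifP => //; rewrite mem_Bl => /negbT; exact: H.
Qed.

Lemma tensC_Cf f t : (forall z, (z.1.2 \notin Ol f) || (z.2.2 \notin Ol f) -> t z = 0) ->
  tensC (Cf f) t.
Proof.
move=> H.
have -> : t = (fun z => \sum_(p <- [seq (x, y) | x <- Bl f, y <- Bl f])
                t p * tens (pb p.1.1 p.1.2) (pb p.2.1 p.2.2) z).
  apply: funext => z.
  have E : forall p, tens (pb p.1.1 p.1.2) (pb p.2.1 p.2.2) z = (z == p)%:R.
    move=> [[a b] [c d]]; rewrite /tens !pbE /=.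
    case: z => x y /=; rewrite [(x, y) == _]xpair_eqE.
    by case: (x == _); case: (y == _); rewrite /= ?mulr1 ?mulr0 ?mul0r.
  under eq_bigr do rewrite E.
  rewrite sum_pred1; last by apply: allpairs_uniq; rewrite ?Bl_uniq // => -[??] [??] _ _.
  clear E; case: ifP => // /negbT; case: z => x y ny.
  apply: H; rewrite -!mem_Bl /=; apply: contraR ny; rewrite negb_or !negbK => /andP[xb yb].
  exact: (allpairs_f pair xb yb).
apply: span_list => p /allpairsP[[x y] /= [xb yb ->]] /=.
exists (pb x.1 x.2), (pb y.1 y.2); split; [|split] => //; apply: pb_Cf; rewrite -mem_Bl //.
Qed.

Lemma Cf_subcoalg f : subcoalg K G F tr tau (Cf f).
Proof.
split; first exact: Cf_finsupp.
split; first exact: Cf_closed.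
move=> h /CfE Hh; rewrite DeltaHE; apply: tensC_Cf => z /orP[] nz; rewrite /D0.
  case: eqP => [e|]; last by rewrite !mul0r.
  rewrite Hh ?mulr0 //; apply: contra nz => nO; rewrite e; exact: Ol_tr.
by rewrite Hh ?mulr0.
Qed.

Lemma mem_Ol1 y : (y \in Ol 1%g) = (y == 1%g).
Proof.
rewrite mem_Ol; apply/existsP/eqP => [[g /eqP <-]|->]; first exact: trg1.
by exists 1%g; rewrite trg1.
Qed.

Lemma Cf1E h : Cf 1%g h <-> (forall z, z.2 != 1%g -> h z = 0).
Proof.
by rewrite CfE; split=> H z; [move=> nz; apply: H; rewrite mem_Ol1 | rewrite mem_Ol1 => nz; apply: H].
Qed.

Lemma mulHE a b : Cf 1%g b ->
  mulH K G F tl sigma a b = fun z => a z * b (tl z.1 z.2, 1%g).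
Proof.
move/Cf1E=> Hb; apply: funext => z; rewrite /mulH (@fsbig_pt _ _ z).
  rewrite (@fsbig_pt _ _ (tl z.1 z.2, 1%g)).
    rewrite /mulB eqxx /=; have [_ [-> _]] := sigma_n z.1 z.2 1%g.
    by rewrite mulg1 pbE -surjective_pairing eqxx !mulr1.
  move=> y ny; rewrite /mulB; case: eqP => [e|]; last by rewrite mulr0.
  rewrite Hb ?mulr0 ?mul0r //; apply: contra ny => /eqP e2.
  by rewrite e -e2 -surjective_pairing.
move=> x nx; rewrite fsbig1 // => y _; rewrite /mulB; case: ifP => _; last by rewrite mulr0.
have [e|ne] := eqVneq y.2 1%g; last by rewrite Hb // mulr0 mul0r.
by rewrite e mulg1 pbE eq_sym -surjective_pairing (negPf nx) !mulr0.
Qed.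

Lemma unitHE z : unitH K G F z = (z.2 == 1%g)%:R.
Proof.
case: z => a b /=; rewrite /unitH (bigD1 a) //= big1 ?addr0; first by rewrite pbE xpair_eqE eqxx.
by move=> g ng; rewrite pbE xpair_eqE eq_sym (negPf ng).
Qed.

Lemma Cf1_tr g y : tr g y = 1%g -> y = 1%g.
Proof. by move=> e; rewrite -(trK g y) e trg1. Qed.

Lemma part1b : hopf_subalg K G F tr tl sigma tau (Cf 1%g).
Proof.
split; first exact: Cf_subcoalg.
split; first by apply/Cf1E => z nz; rewrite unitHE (negPf nz).
split.
  move=> a b /Cf1E Ha Hb; rewrite mulHE //; apply/Cf1E => z nz.
  by rewrite Ha ?mul0r.
move=> a /Cf1E Ha; rewrite SHE; apply/Cf1E => z nz; rewrite Ha ?mulr0 //=.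
apply: contra nz => /eqP /Cf1_tr /eqP; rewrite invg_eq1 //.
Qed.

Lemma part1c : hopf_iso_kG K G F tr tl sigma tau.
Proof.
have Ext : forall a b, Cf 1%g a -> Cf 1%g b -> (forall g, a (g, 1%g) = b (g, 1%g)) -> a = b.
  move=> a b /Cf1E Ha /Cf1E Hb H; apply: funext => -[g y].
  have [->|ny] := eqVneq y 1%g; first exact: H.
  by rewrite Ha ?Hb.
split.
  by move=> g; apply: funext => x; rewrite /phi1 pbE /pG /dvec xpair_eqE eqxx andbT; case: eqP.
split.
  move=> a b Ha Hb e; apply: Ext => // g; exact: (congr1 (fun u => u g) e).
split.
  move=> c; exists (fun z => if z.2 == 1%g then c z.1 else 0); split.
    by apply/Cf1E => z nz; rewrite (negPf nz).
  by apply: funext => g; rewrite /phi1 eqxx.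
split; first by [].
split.
  move=> a b Ha Hb; rewrite mulHE //; apply: funext => g.
  by rewrite /phi1 /kG_mul /= tl1.
split.
  by apply: funext => g; rewrite /phi1 /kG_unit unitHE eqxx.
split.
  move=> a Ha; apply: funext => -[u v]; rewrite /phi1_tens DeltaHE /D0 /= trg1 eqxx.
  have [_ [_ ->]] := tau_n u v 1%g; rewrite mul1r mul1r /kG_Delta /phi1 /=.
  rewrite (bigD1 (u * v)%g) //= [X in _ + X = _]big1 ?addr0; last first.
    move=> g ng; rewrite big1 ?mulr0 // => t _; rewrite /tens /pG /dvec /=.
    case: eqP => [e1|]; last by rewrite mul0r.
    case: eqP => [e2|]; last by rewrite mulr0.
    by move: ng; rewrite e1 e2 mulgKV eqxx.
  rewrite (bigD1 v) //= [X in _ + X]big1 ?addr0.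
    by rewrite /tens /pG /dvec /= mulgK !eqxx mulr1 mulr1.
  by move=> t nt; rewrite /tens /pG /dvec /= [v == t]eq_sym (negPf nt) mulr0.
split.
  move=> a /Cf1E Ha; rewrite /kG_eps /epsH /phi1 (@fsbig_pt _ _ (1%g, 1%g)) /= ?eqxx ?mulr1 //.
  move=> [g y] ny /=; have [eg|ng] := eqVneq g 1%g; last by rewrite mulr0.
  by rewrite Ha ?mul0r //=; apply: contra ny => /eqP ->; rewrite eg.
move=> a Ha; rewrite SHE; apply: funext => z.
rewrite /kG_S /phi1 /binv /= tl1 invg1 trg1 (bigD1 z^-1)%g //= big1 ?addr0.
  rewrite /pG /dvec invgK eqxx mulr1 /cS /= invgK trg1 invg1.
  have [_ [-> _]] := sigma_n z 1%g 1%g; have [_ [_ ->]] := tau_n z z^-1 1%g.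
  by rewrite invr1 mul1r mul1r.
move=> g ng; rewrite /pG /dvec; case: eqP => [e|]; last by rewrite mulr0.
by move: ng; rewrite e invgK eqxx.
Qed.

Lemma sub_slices E h : subcoalg K G F tr tau E -> E h ->
  (forall b, E (fun a => D0 h (a, b))) /\ (forall a, E (fun b => D0 h (a, b))).
Proof.
move=> [_ [cE HD]] Eh; have := HD h Eh; rewrite DeltaHE => Ht.
by split=> x; [apply: tensC_slice1 | apply: tensC_slice2].
Qed.

Lemma nonzero_pt (h : T -> K) : h <> (fun _ => 0) -> exists z, h z != 0.
Proof.
move=> nh; apply: contra_notP nh => H; apply: funext => z.
by apply/eqP; apply: contra_notT H => nz; exists z.
Qed.

Lemma part2a f : (forall g : G, tr g f = f -> g = 1%g) ->
  simple_subcoalg K G F tr tau (Cf f).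
Proof.
move=> hs.
have inj : forall y u u', y \in Ol f -> tr u y = tr u' y -> u = u'.
  move=> y u u'; rewrite mem_Ol => /existsP[g1 /eqP <-]; rewrite -!trM => e.
  have := congr1 (tr (u' * g1)^-1) e; rewrite !trK -trM => /hs e2.
  by apply: (mulIg g1); rewrite -(mulg1_eq e2) invgK.
split; first exact: Cf_subcoalg.
split.
  exists (pb 1%g f); split; first by apply: (@pb_Cf f (1%g, f)); rewrite /= -{1}(tr1 f) Ol_f.
  move=> e; have := congr1 (fun u => u (1%g, f)) e; rewrite pbE eqxx /= => /eqP; rewrite oner_eq0.
  by [].
move=> E sE EC.
have [[h [Eh nh]]|none] := pselect (exists h, E h /\ h <> (fun _ => 0)); last first.
  left; apply/seteqP; split=> [u Eu|u /= ->]; last by apply: closed0; case: sE => _ [].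
  by apply: contra_notP none => nu; exists u.
right; apply/seteqP; split=> // k Ck.
have [[g0 y0] /= nz] := nonzero_pt nh.
have y0O : y0 \in Ol f.
  by apply: contraT => nO; move/CfE: (EC h Eh) => /(_ (g0, y0) nO) e; rewrite e eqxx in nz.
suff Epb : forall p q, q \in Ol f -> E (pb p q).
  rewrite (Cf_expand Ck); apply: closed_sum; first by case: sE => _ [].
  by move=> x; rewrite mem_Bl; apply: Epb.
move=> p q qO.
have [c ec] : exists c, tr c y0 = q.
  move: y0O qO; rewrite !mem_Ol => /existsP[g1 /eqP <-] /existsP[g2 /eqP <-].
  by exists (g2 * g1^-1)%g; rewrite trM trK.
pose m := (p * c)%g; pose w := tr m y0; pose a := (g0 * m^-1)%g.
have [_ H1] := sub_slices sE Eh.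
have [H2 _] := sub_slices sE (H1 (a, w)).
have E2 := H2 (c, y0).
set k2 := (fun _ => _) in E2.
pose sc := tau p c y0 * tau a m y0 * h (g0, y0).
have sc_nz : sc != 0 by rewrite /sc !mulf_neq0.
have -> : pb p q = (fun z => sc^-1 * k2 z).
  apply: funext => -[a' w']; rewrite /k2 /D0 /= pbE xpair_eqE.
  have [ew|new] := eqVneq w' q; last by rewrite andbF ec (negPf new) /= !mul0r mulr0.
  rewrite ew -ec eqxx andbT mul1r /w.
  have [->|na] := eqVneq a' p.
    rewrite eqxx mul1r /a /m mulgKV [tau p c y0 * _]mulrA; exact: (esym (mulVf sc_nz)).
  have -> : (tr m y0 == tr (a' * c) y0) = false.
    apply/negbTE; apply: contra na => /eqP /(inj _ _ _ y0O) e.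
    by apply/eqP; apply: (mulIg c); rewrite -e.
  by rewrite /= !mul0r !mulr0.
by apply: closed_scale => //; case: sE => _ [].
Qed.

Lemma Ol_inv f : (exists g, tr g f = f^-1%g) -> forall y, y \in Ol f -> y^-1%g \in Ol f.
Proof.
move=> [g0 e] y; rewrite mem_Ol => /existsP[m /eqP <-]; rewrite tr_inv -e -trM.
exact: Ol_f.
Qed.

Lemma part2b f : ((SH K G F tr tl sigma tau) @` (Cf f) = Cf f <->
        exists g : G, tr g f = (f^-1)%g).
Proof.
split.
  move=> e; have : Cf f (SH K G F tr tl sigma tau (pb 1%g f)).
    rewrite -e; exists (pb 1%g f) => //; apply: (@pb_Cf f (1%g, f)); by rewrite /= -{1}(tr1 f) Ol_f.
  move/CfE => H0; have := H0 (bmap (1%g, f)); rewrite SHE /= bmapK pbE eqxx mulr1 => H.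
  have : (bmap (1%g, f)).2 \in Ol f.
    by apply: contraT => /H /eqP; rewrite (negPf (cS_nz _)).
  by rewrite /bmap /= tr1 mem_Ol => /existsP[g /eqP <-]; exists g.
move=> ex; apply/seteqP; split.
  move=> u [h /CfE Hh <-]; apply/CfE => z nz; rewrite SHE Hh ?mulr0 //.
  apply: contra nz; rewrite /binv /= => H; rewrite -(invgK z.2); apply: (Ol_inv ex).
  by rewrite -(trK (tl z.1 z.2) (z.2)^-1%g); apply: Ol_tr.
move=> k /CfE Hk; exists (fun x => (cS x)^-1 * k (bmap x)).
  apply/CfE => x nx; rewrite Hk ?mulr0 //; rewrite /bmap /=; apply: contra nx => H.
  have := Ol_inv ex H; rewrite invgK => /(Ol_tr x.1^-1); rewrite trK //.
by rewrite SHE; apply: funext => z; rewrite binvK mulrA mulfV ?cS_nz ?mul1r.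
Qed.

Section LA.
Variable f : F.
Local Notation n := (size (Bl f)).
Definition bl (i : 'I_n) : T := nth (1%g, 1%g) (Bl f) i.
Definition rho (h : T -> K) : 'rV[K]_n := \row_i h (bl i).
Definition iota (v : 'rV[K]_n) : T -> K := fun z => \sum_i v 0 i * (z == bl i)%:R.

Lemma iota_rho h : Cf f h -> iota (rho h) = h.
Proof.
move/CfE=> H; apply: funext => z; rewrite /iota.
under eq_bigr do rewrite mxE.
rewrite -(big_mkord xpredT (fun i => h (nth (1%g, 1%g) (Bl f) i) * (z == nth (1%g, 1%g) (Bl f) i)%:R)).
rewrite -(big_nth (1%g, 1%g) xpredT (fun x => h x * (z == x)%:R)) sum_pred1 ?Bl_uniq //.
by case: ifP => //; rewrite mem_Bl => /negbT /H.
Qed.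

Lemma rho_iota v : rho (iota v) = v.
Proof.
apply/rowP => j; rewrite mxE /iota (bigD1 j) //= eqxx mulr1 big1 ?addr0 // => i ij.
rewrite /bl nth_uniq ?Bl_uniq ?ltn_ord //.
rewrite (_ : (j == i :> nat) = false) ?mulr0 //; apply/negbTE; rewrite eq_sym; exact: ij.
Qed.

Lemma iota_Cf v : Cf f (iota v).
Proof.
apply/CfE => z zO; rewrite /iota big1 // => i _; case: eqP => [e|]; last by rewrite mulr0.
by move: zO; rewrite e -mem_Bl /bl mem_nth.
Qed.

Lemma iota_lin k u v : iota (k *: u + v) = fun z => k * iota u z + iota v z.
Proof.
apply: funext => z; rewrite /iota mulr_sumr -big_split; apply: eq_bigr => i _.
by rewrite !mxE mulrDl mulrA.
Qed.

Lemma iota0 : iota 0 = fun _ => 0.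
Proof. by apply: funext => z; rewrite /iota big1 // => i _; rewrite mxE mul0r. Qed.

Lemma rho_lin k u v : rho (fun z => k * u z + v z) = k *: rho u + rho v.
Proof. by apply/rowP => i; rewrite !mxE. Qed.

Definition rep (E : set (T -> K)) (M : 'M[K]_n) := forall v : 'rV[K]_n, (v <= M)%MS <-> E (iota v).

Lemma rep_ex E : closed E -> exists M, rep E M.
Proof.
move=> cE.
have S_lin : forall k u v, E (iota u) -> E (iota v) -> E (iota (k *: u + v)).
  by move=> k u v Eu Ev; rewrite iota_lin; apply: closed_lin.
have S0 : E (iota 0) by rewrite iota0; apply: closed0.
have SZ : forall k u, E (iota u) -> E (iota (k *: u)).
  by move=> k u Eu; rewrite -[k *: u]addr0; apply: S_lin.
have SD : forall u v, E (iota u) -> E (iota v) -> E (iota (u + v)).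
  by move=> u v Eu Ev; rewrite -[u]scale1r; apply: S_lin.
have Ssub : forall (M : 'M_n), (forall i, E (iota (row i M))) -> forall v, (v <= M)%MS -> E (iota v).
  move=> M HM v /submxP [u ->]; rewrite mulmx_sum_row.
  by apply: (big_ind (fun x => E (iota x))) => // i _; apply: SZ.
have ext : forall M : 'M_n, (forall i, E (iota (row i M))) -> ~ rep E M ->
    exists M2 : 'M_n, (forall i, E (iota (row i M2))) /\ (\rank M < \rank M2)%N.
  move=> M HM nrep.
  have [v [Ev nv]] : exists v, E (iota v) /\ ~~ (v <= M)%MS.
    apply: contra_notP nrep => H v; split; first exact: Ssub.
    by move=> Ev; apply: contra_notT H => nv; exists v.
  exists (M + v)%MS; split.
    move=> i; have /sub_addsmxP [[u1 u2] /= ->] := row_sub i (M + v)%MS.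
    apply: SD; first by apply: (Ssub M) => //; apply: submxMl.
    by rewrite [u2]mx11_scalar mul_scalar_mx; apply: SZ.
  apply: rank_ltmx; rewrite ltmxE addsmxSl /=; apply: contra nv => H.
  exact: submx_trans (addsmxSr M v) H.
suff H : forall k (M : 'M_n), (n - \rank M <= k)%N -> (forall i, E (iota (row i M))) -> exists M', rep E M'.
  apply: (H n 0); first exact: leq_subr.
  by move=> i; rewrite row0.
elim => [|k IH] M Hk HM.
  have [r|nr] := pselect (rep E M); first by exists M.
  have [M2 [_ lt]] := ext M HM nr; have := rank_leq_col M2; lia.
have [r|nr] := pselect (rep E M); first by exists M.
have [M2 [H2 lt]] := ext M HM nr; apply: (IH M2) => //.
have := rank_leq_col M2; lia.
Qed.

Lemma rep_sub E D ME MD : rep E ME -> rep D MD -> E `<=` D -> (ME <= MD)%MS.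
Proof.
move=> rE rD ED; apply/row_subP => i; apply/(rD (row i ME)); apply: ED.
by apply/(rE (row i ME)); apply: row_sub.
Qed.

Lemma rep_lt E D ME MD : rep E ME -> rep D MD -> E `<=` D -> D `<=` Cf f -> E <> D ->
  (\rank ME < \rank MD)%N.
Proof.
move=> rE rD ED DC nED.
have [h [Dh nEh]] : exists h, D h /\ ~ E h.
  apply: contra_notP nED => H; apply/seteqP; split => // h Dh.
  by apply: contra_notP H => nh; exists h.
apply: rank_ltmx; rewrite ltmxE (rep_sub rE rD ED) /=; apply/negP => sDE.
apply: nEh; rewrite -(iota_rho (DC h Dh)); apply/(rE (rho h)).
apply: submx_trans sDE; apply/(rD (rho h)); rewrite iota_rho //; exact: DC.
Qed.

Definition projE (M : 'M[K]_n) (h : T -> K) : T -> K := iota (rho h *m proj_mx M (M^C)%MS).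

Lemma projE_in E M h : rep E M -> E (projE M h).
Proof. by move=> rE; apply/(rE _); apply: proj_mx_sub. Qed.

Lemma projE_id E M h : rep E M -> E `<=` Cf f -> E h -> projE M h = h.
Proof.
move=> rE EC Eh; rewrite /projE proj_mx_id ?capmx_compl ?iota_rho //; first exact: EC.
by apply/(rE _); rewrite iota_rho //; exact: EC.
Qed.

Lemma projE_lin M k u v : projE M (fun z => k * u z + v z) = fun z => k * projE M u z + projE M v z.
Proof. by rewrite /projE rho_lin mulmxDl -scalemxAl iota_lin. Qed.

End LA.

Definition Lop (b : T) (h : T -> K) : T -> K := fun a => D0 h (a, b).
Definition Rop (a : T) (h : T -> K) : T -> K := fun b => D0 h (a, b).

Definition linb (P : (T -> K) -> (T -> K)) :=
  forall k u v, P (fun z => k * u z + v z) = fun z => k * P u z + P v z.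

Lemma linb0 P : linb P -> P (fun _ => 0) = fun _ => 0.
Proof.
move=> H; have := H (-1) (fun _ => 0) (fun _ => 0).
rewrite (_ : (fun _ => -1 * 0 + 0) = fun _ => 0); last by apply: funext => z; rewrite mulr0 addr0.
move=> e; apply: funext => z; have := congr1 (fun u => u z) e => /=.
by rewrite mulN1r addNr.
Qed.

Lemma linbZ P k u : linb P -> P (fun z => k * u z) = fun z => k * P u z.
Proof.
move=> H; have := H k u (fun _ => 0); rewrite linb0 //.
rewrite (_ : (fun z => k * u z + 0) = fun z => k * u z); last by apply: funext => z; rewrite addr0.
by move=> ->; apply: funext => z; rewrite addr0.
Qed.

Lemma linbD P u v : linb P -> P (fun z => u z + v z) = fun z => P u z + P v z.
Proof.
move=> H; have := H 1 u v.
rewrite (_ : (fun z => 1 * u z + v z) = fun z => u z + v z); last by apply: funext => z; rewrite mul1r.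
by move=> ->; apply: funext => z; rewrite mul1r.
Qed.

Lemma linb_sumW P (X : Type) (r : seq X) (W : X -> T -> K) : linb P ->
  P (fun z => \sum_(i <- r) W i z) = fun z => \sum_(i <- r) P (W i) z.
Proof.
move=> H; elim: r => [|x r IH].
  rewrite (_ : (fun z => _) = fun _ => 0); last by apply: funext => z; rewrite big_nil.
  by rewrite linb0 //; apply: funext => z; rewrite big_nil.
rewrite (_ : (fun z => _) = fun z => W x z + \sum_(i <- r) W i z); last by apply: funext => z; rewrite big_cons.
by rewrite linbD // IH; apply: funext => z; rewrite big_cons.
Qed.

Lemma linb_sumL P (X : Type) (r : seq X) (c : X -> K) (W : X -> T -> K) : linb P ->
  P (fun z => \sum_(i <- r) c i * W i z) = fun z => \sum_(i <- r) c i * P (W i) z.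
Proof.
move=> H; rewrite (@linb_sumW P _ r (fun i z => c i * W i z)) //.
by apply: funext => z; apply: eq_bigr => i _; rewrite linbZ.
Qed.

Lemma linb_Lop b : linb (Lop b).
Proof.
move=> k u v; apply: funext => a; rewrite /Lop /D0 /=.
by rewrite mulrDr mulrCA.
Qed.

Lemma linb_Rop a : linb (Rop a).
Proof.
move=> k u v; apply: funext => b; rewrite /Rop /D0 /=.
by rewrite mulrDr mulrCA.
Qed.

Lemma linb_projE f M : linb (@projE f M).
Proof. by move=> k u v; rewrite projE_lin. Qed.

Lemma linb_comp P P' : linb P -> linb P' -> linb (fun h => P (P' h)).
Proof. by move=> H H' k u v; rewrite H' H. Qed.

Lemma LL a w b y h : Lop (a, w) (Lop (b, y) h) =
  fun z => (w == tr b y)%:R * tau a b y * Lop ((a * b)%g, y) h z.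
Proof.
apply: funext => -[c v]; rewrite /Lop /D0 /=.
have [->|nw] := eqVneq w (tr b y); last by rewrite !mul0r !mulr0.
rewrite -trM mulgA; case: (v == _); rewrite ?mul0r ?mulr0 //.
by rewrite !mul1r !mulrA tau_cocycle; congr (_ * _); rewrite mulrC.
Qed.

Lemma RR a w b y h : Rop (b, y) (Rop (a, w) h) =
  fun z => (w == tr b y)%:R * tau a b y * Rop ((a * b)%g, y) h z.
Proof.
apply: funext => -[c u]; rewrite /Rop /D0 /=.
have [->|nw] := eqVneq y (tr c u); last by rewrite !mul0r !mulr0.
rewrite -trM mulgA; case: (w == _); rewrite ?mul0r ?mulr0 //.
by rewrite /= !mulr1n !mul1r !mulrA tau_cocycle [tau b c u * _]mulrC.
Qed.

Lemma LR a w c u h : Lop (c, u) (Rop (a, w) h) = Rop (a, w) (Lop (c, u) h).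
Proof.
apply: funext => -[d v]; rewrite /Rop /Lop /D0 /=.
have [->|nv] := eqVneq v (tr c u); last by rewrite !mul0r !mulr0.
rewrite -trM mulgA; case: (w == _); rewrite ?mul0r ?mulr0 //.
by rewrite /= !mulr1n !mul1r !mulrA tau_cocycle [tau d c u * _]mulrC.
Qed.

Lemma sumOl f w d (F0 : F -> K) :
  \sum_(v <- Ol f) (w == tr d v)%:R * F0 v = (tr d^-1 w \in Ol f)%:R * F0 (tr d^-1 w).
Proof.
rewrite (eq_bigr (fun v => F0 v * (tr d^-1 w == v)%:R)); last first.
  move=> v _; rewrite mulrC.
  have -> : (w == tr d v) = (tr d^-1 w == v) by apply/idP/idP => /eqP e; apply/eqP; [rewrite e trK | rewrite -e trKV].
  by [].
by rewrite sum_pred1 ?Ol_uniq //; case: ifP; rewrite ?mul1r ?mul0r.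
Qed.

Definition mu (g : G) (y : F) : K := (tau g g^-1 (tr g y))^-1.

Lemma sepK a d y : mu d y * tau a d y = mu (a * d) y * tau (a * d)^-1 a (tr d y).
Proof.
rewrite /mu; set w := tr d y.
have c1 := tau_cocycle a d (a * d)^-1 (tr (a * d) y).
have c2 := tau_cocycle d (a * d)^-1 a w.
have c3 := tau_cocycle a a^-1 a w.
have e1 : (d * (a * d)^-1 = a^-1)%g by rewrite invMg mulgA mulgV mul1g.
have e2 : ((a * d)^-1 * a = d^-1)%g by rewrite invMg -mulgA mulVg mulg1.
rewrite trK e1 trM -/w in c1; rewrite e1 e2 in c2; rewrite mulgV mulVg in c3.
have [t0 [t1 _]] := tau_n a a w.
rewrite t0 t1 mulr1 mul1r in c3.
rewrite trM -/w.
have key : tau a d y * tau (a * d) (a * d)^-1 (tr a w) = tau (a * d)^-1 a w * tau d d^-1 w.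
  by rewrite c1 c3 mulrC c2 mulrC.
have Znz := tau_nz (a * d) (a * d)^-1 (tr a w).
have Xnz := tau_nz d d^-1 w.
rewrite -[tau a d y](mulfK Znz) key.
by field; rewrite ?Znz ?Xnz.
Qed.

Section PI.
Variable f : F.
Variable M : 'M[K]_(size (Bl f)).
Local Notation p := (@projE f M).

Definition Qop h : T -> K := fun z =>
  \sum_(d : G) \sum_(v <- Ol f) mu d v * Rop ((d^-1)%g, tr d v) (p (Rop (d, v) h)) z.
Definition NG : K := #|G|%:R.
Definition piop h : T -> K := fun z => (NG * NG)^-1 *
  \sum_(g : G) \sum_(y <- Ol f) mu g y * Lop (g, y) (Qop (Lop ((g^-1)%g, tr g y) h)) z.

Lemma linb_dist2 P (c : G -> F -> K) (X : G -> F -> T -> K) : linb P ->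
  P (fun z => \sum_(d : G) \sum_(v <- Ol f) c d v * X d v z) =
  fun z => \sum_(d : G) \sum_(v <- Ol f) c d v * P (X d v) z.
Proof.
move=> H; rewrite (@linb_sumW P _ _ (fun d z => \sum_(v <- Ol f) c d v * X d v z)) //.
by apply: funext => z; apply: eq_bigr => d _; rewrite linb_sumL.
Qed.

Lemma linb_dsum (c : G -> F -> K) (P : G -> F -> (T -> K) -> T -> K) :
  (forall d v, linb (P d v)) -> linb (fun h z => \sum_(d : G) \sum_(v <- Ol f) c d v * P d v h z).
Proof.
move=> H k u v; apply: funext => z; rewrite mulr_sumr -big_split; apply: eq_bigr => d _.
rewrite mulr_sumr -big_split; apply: eq_bigr => y _; rewrite H /=.
by rewrite mulrDr mulrCA.
Qed.

Lemma linb_Q : linb Qop.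
Proof.
apply: (@linb_dsum mu (fun d v h => Rop ((d^-1)%g, tr d v) (p (Rop (d, v) h)))) => d v.
by apply: linb_comp; [apply: linb_Rop | apply: linb_comp; [apply: linb_projE | apply: linb_Rop]].
Qed.

Lemma linb_pi : linb piop.
Proof.
move=> k u v; apply: funext => z; rewrite /piop.
have H := @linb_dsum mu (fun g y h => Lop (g, y) (Qop (Lop ((g^-1)%g, tr g y) h)))
  (fun g y => linb_comp (linb_Lop _) (linb_comp linb_Q (linb_Lop _))).
have := congr1 (fun F0 => F0 z) (H k u v) => /= ->.
by rewrite mulrDr mulrCA.
Qed.

Lemma QR a w h : Qop (Rop (a, w) h) = Rop (a, w) (Qop h).
Proof.
apply: funext => z.
transitivity (\sum_(d : G) (tr d^-1 w \in Ol f)%:R * (mu d (tr d^-1 w) * tau a d (tr d^-1 w) *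
   Rop ((d^-1)%g, tr d (tr d^-1 w)) (p (Rop ((a * d)%g, tr d^-1 w) h)) z)).
  rewrite /Qop; apply: eq_bigr => d _.
  rewrite -(sumOl f w d (fun v => mu d v * tau a d v * Rop ((d^-1)%g, tr d v) (p (Rop ((a * d)%g, v) h)) z)).
  apply: eq_bigr => v _; rewrite RR (linbZ _ _ (linb_projE M)) (linbZ _ _ (linb_Rop _)) /=.
  ring.
transitivity (\sum_(d : G) (tr d^-1 (tr a w) \in Ol f)%:R * (mu d (tr d^-1 (tr a w)) * tau d^-1 a w *
   Rop ((d^-1 * a)%g, w) (p (Rop (d, tr d^-1 (tr a w)) h)) z)); last first.
  rewrite /Qop (linb_dist2 _ _ (linb_Rop _)); apply: eq_bigr => d _.
  rewrite -(sumOl f (tr a w) d (fun v => mu d v * tau d^-1 a w * Rop ((d^-1 * a)%g, w) (p (Rop (d, v) h)) z)).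
  apply: eq_bigr => v _; rewrite RR /= eq_sym.
  ring.
rewrite [RHS](reindex_inj (mulgI a)) /=; apply: eq_bigr => d _.
have e2 : ((a * d)^-1 * a = d^-1)%g by rewrite invMg -mulgA mulVg mulg1.
have e3 : tr (a * d)^-1 (tr a w) = tr d^-1 w by rewrite -trM e2.
by rewrite e2 e3 sepK trKV.
Qed.

Lemma piL a w h : piop (Lop (a, w) h) = Lop (a, w) (piop h).
Proof.
apply: funext => z.
transitivity ((NG * NG)^-1 * \sum_(g : G) (tr g^-1 (tr a w) \in Ol f)%:R *
   (mu g (tr g^-1 (tr a w)) * tau g^-1 a w *
    Lop (g, tr g^-1 (tr a w)) (Qop (Lop ((g^-1 * a)%g, w) h)) z)).
  rewrite /piop; congr (_ * _); apply: eq_bigr => g _.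
  rewrite -(sumOl f (tr a w) g (fun y => mu g y * tau g^-1 a w * Lop (g, y) (Qop (Lop ((g^-1 * a)%g, w) h)) z)).
  apply: eq_bigr => y _; rewrite LL (linbZ _ _ linb_Q) (linbZ _ _ (linb_Lop _)) /= eq_sym.
  ring.
transitivity ((NG * NG)^-1 * \sum_(g : G) (tr g^-1 w \in Ol f)%:R *
   (mu g (tr g^-1 w) * tau a g (tr g^-1 w) *
    Lop ((a * g)%g, tr g^-1 w) (Qop (Lop ((g^-1)%g, tr g (tr g^-1 w)) h)) z)); last first.
  rewrite /piop (linbZ _ _ (linb_Lop _)) /= (linb_dist2 _ _ (linb_Lop _)) /=.
  congr (_ * _); apply: eq_bigr => g _.
  rewrite -(sumOl f w g (fun y => mu g y * tau a g y * Lop ((a * g)%g, y) (Qop (Lop ((g^-1)%g, tr g y) h)) z)).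
  apply: eq_bigr => y _; rewrite LL /=.
  ring.
congr (_ * _); rewrite [LHS](reindex_inj (mulgI a)) /=; apply: eq_bigr => g _.
have e2 : ((a * g)^-1 * a = g^-1)%g by rewrite invMg -mulgA mulVg mulg1.
have e3 : tr (a * g)^-1 (tr a w) = tr g^-1 w by rewrite -trM e2.
by rewrite e2 e3 sepK trKV.
Qed.

Lemma piR a w h : piop (Rop (a, w) h) = Rop (a, w) (piop h).
Proof.
apply: funext => z; rewrite /piop (linbZ _ _ (linb_Rop _)) /= (linb_dist2 _ _ (linb_Rop _)) /=.
congr (_ * _); apply: eq_bigr => g _; apply: eq_bigr => y _.
by rewrite LR QR LR.
Qed.

Lemma sum_Ol_tr (F0 : F -> K) d : \sum_(v <- Ol f) F0 (tr d v) = \sum_(v <- Ol f) F0 v.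
Proof.
rewrite -(big_map (tr d) xpredT F0); apply: perm_big; apply: uniq_perm.
- by rewrite map_inj_uniq ?Ol_uniq //; move=> x y; apply: tr_inj.
- exact: Ol_uniq.
move=> x; apply/mapP/idP => [[v vO ->]|xO]; first exact: Ol_tr.
by exists (tr d^-1 x); [exact: Ol_tr | rewrite trKV].
Qed.

Lemma sum_R1 n0 z : Cf f n0 -> \sum_(v <- Ol f) Rop (1%g, v) n0 z = n0 z.
Proof.
move/CfE => H; case: z => b y; rewrite /Rop /D0 /=.
have [t1 _] := tau_n b b y.
rewrite (eq_bigr (fun v => (v == tr b y)%:R * n0 (b, y))); last by move=> v _; rewrite t1 mulr1 mul1g.
rewrite (@sum_pred1c _ (Ol f) (n0 (b, y)) (tr b y) (Ol_uniq f)).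
case: (boolP (tr b y \in Ol f)) => [_|nO]; first by rewrite mul1r.
by rewrite H ?mulr0 //=; apply: contra nO; apply: Ol_tr.
Qed.

Lemma sum_L1 n0 z : Cf f n0 -> \sum_(v <- Ol f) Lop (1%g, v) n0 z = n0 z.
Proof.
move/CfE => H; case: z => a w; rewrite /Lop /D0 /=.
have [_ [t1 _]] := tau_n a a w.
rewrite (eq_bigr (fun v => (v == w)%:R * n0 (a, v))); last first.
  by move=> v _; rewrite tr1 mulg1 (_ : tau a 1 v = 1) ?mulr1 1?eq_sym //; have [_ []] := tau_n a a v.
rewrite sum_pred1l ?Ol_uniq //; case: (boolP (w \in Ol f)) => [_|nO]; first by rewrite mul1r.
by rewrite H ?mulr0.
Qed.

Lemma sumG_const (x : K) : \sum_(d : G) x = NG * x.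
Proof. by rewrite sumr_const -mulr_natl. Qed.

Lemma Q_id E n0 : subcoalg K G F tr tau E -> E `<=` Cf f -> rep E M -> E n0 ->
  Qop n0 = fun z => NG * n0 z.
Proof.
move=> sE EC rE En; apply: funext => z; rewrite /Qop.
have step : forall d v, mu d v * Rop ((d^-1)%g, tr d v) (p (Rop (d, v) n0)) z = Rop (1%g, tr d v) n0 z.
  move=> d v; rewrite (projE_id rE EC); last by have [_ H] := sub_slices sE En; apply: H.
  rewrite RR /= trK eqxx mulgV /mu mul1r mulrA mulVf ?tau_nz //.
  by rewrite mul1r.
rewrite (eq_bigr (fun d => n0 z)); first exact: sumG_const.
move=> d _; under eq_bigr do rewrite step.
by rewrite (sum_Ol_tr (fun v => Rop (1%g, v) n0 z)) sum_R1 //; exact: EC.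
Qed.

Lemma pi_id E e : subcoalg K G F tr tau E -> E `<=` Cf f -> rep E M -> NG != 0 -> E e ->
  piop e = e.
Proof.
move=> sE EC rE NGnz Ee; apply: funext => z; rewrite /piop.
have step : forall g y, mu g y * Lop (g, y) (Qop (Lop ((g^-1)%g, tr g y) e)) z = NG * Lop (1%g, tr g y) e z.
  move=> g y; rewrite (Q_id sE EC rE); last by have [H _] := sub_slices sE Ee; apply: H.
  rewrite (linbZ _ _ (linb_Lop _)) /= LL /= trK eqxx mulgV /mu mulr1n mul1r.
  by field; exact: tau_nz.
rewrite (eq_bigr (fun g => NG * e z)).
  by rewrite sumG_const; field; exact: NGnz.
move=> g _; under eq_bigr do rewrite step.
rewrite -mulr_sumr (sum_Ol_tr (fun v => Lop (1%g, v) e z)) sum_L1 //; exact: EC.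
Qed.

Lemma Q_in E h : subcoalg K G F tr tau E -> rep E M -> E (Qop h).
Proof.
move=> sE rE; have cE : closed E by case: sE => _ [].
apply: closed_sumW => // d _; apply: closed_sum => // v _.
have [_ H] := sub_slices sE (projE_in (Rop (d, v) h) rE); exact: H.
Qed.

Lemma pi_in E h : subcoalg K G F tr tau E -> rep E M -> E (piop h).
Proof.
move=> sE rE; have cE : closed E by case: sE => _ [].
apply: closed_scale => //; apply: closed_sumW => // g _; apply: closed_sum => // y _.
have [H _] := sub_slices sE (Q_in (Lop ((g^-1)%g, tr g y) h) sE rE); exact: H.
Qed.

End PI.

Lemma complement f E D : subcoalg K G F tr tau E -> E `<=` D -> D `<=` Cf f -> NG != 0 ->
  exists pi : (T -> K) -> T -> K, [/\ linb pi, (forall h, E (pi h)), (forall e, E e -> pi e = e),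
    (forall b h, pi (Lop b h) = Lop b (pi h)) & (forall a h, pi (Rop a h) = Rop a (pi h))].
Proof.
move=> sE ED DC NGnz.
have [M rE] := @rep_ex f E (proj1 (proj2 sE)).
exists (piop M); split.
- exact: linb_pi.
- by move=> h; apply: pi_in.
- by move=> e Ee; apply: (pi_id sE) => // x Ex; apply: DC; apply: ED.
- by move=> [a w] h; apply: piL.
- by move=> [a w] h; apply: piR.
Qed.

Definition T2 (pi : (T -> K) -> T -> K) (t : T * T -> K) : T * T -> K := fun z =>
  t z - pi (fun a => t (a, z.2)) z.1 - pi (fun b => t (z.1, b)) z.2
      + pi (fun a => pi (fun b => t (a, b)) z.2) z.1.

Lemma T2_tens pi a b : linb pi ->
  T2 pi (tens a b) = tens (fun z => a z - pi a z) (fun z => b z - pi b z).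
Proof.
move=> H; apply: funext => -[z1 z2]; rewrite /T2 /tens /=.
have e1 : pi (fun a' => a a' * b z2) = fun z => b z2 * pi a z.
  rewrite (_ : (fun a' => a a' * b z2) = fun a' => b z2 * a a'); first exact: linbZ.
  by apply: funext => a'; rewrite mulrC.
have e2 : pi (fun b' => a z1 * b b') = fun z => a z1 * pi b z by exact: linbZ.
have e3 : (fun a' => pi (fun b' => a a' * b b') z2) = fun a' => pi b z2 * a a'.
  by apply: funext => a'; rewrite linbZ //= mulrC.
rewrite e1 e2 e3 linbZ //=.
ring.
Qed.

Lemma T2_sum pi n (c : 'I_n -> K) (w : 'I_n -> T * T -> K) : linb pi ->
  T2 pi (fun z => \sum_(i < n) c i * w i z) = fun z => \sum_(i < n) c i * T2 pi (w i) z.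
Proof.
move=> H; apply: funext => -[z1 z2]; rewrite /T2 /=.
have e : (fun a => pi (fun b => \sum_(i < n) c i * w i (a, b)) z2) =
         (fun a => \sum_(i < n) c i * (fun a' => pi (fun b => w i (a', b)) z2) a).
  by apply: funext => a; rewrite (linb_sumL _ _ _ H).
rewrite e !(linb_sumL _ _ _ H).
rewrite -!sumrB -big_split /=; apply: eq_bigr => i _.
ring.
Qed.

Lemma T2_D0 pi h : linb pi -> pi h = (fun _ => 0) ->
  (forall b h, pi (Lop b h) = Lop b (pi h)) -> (forall a h, pi (Rop a h) = Rop a (pi h)) ->
  T2 pi (D0 h) = D0 h.
Proof.
move=> H ph0 HL HR; apply: funext => -[z1 z2]; rewrite /T2 /=.
have L0 : forall b, pi (fun a => D0 h (a, b)) = fun _ => 0.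
  by move=> b; rewrite (_ : (fun a => D0 h (a, b)) = Lop b h) // HL ph0 linb0 //; apply: linb_Lop.
have R0 : forall a, pi (fun b => D0 h (a, b)) = fun _ => 0.
  by move=> a; rewrite (_ : (fun b => D0 h (a, b)) = Rop a h) // HR ph0 linb0 //; apply: linb_Rop.
have R0' : (fun a => pi (fun b => D0 h (a, b)) z2) = fun _ => 0.
  by apply: funext => a; rewrite R0.
rewrite L0 R0 R0' linb0 //.
ring.
Qed.

Lemma D2_subcoalg D E pi : subcoalg K G F tr tau D -> E `<=` D -> linb pi ->
  (forall h, E (pi h)) -> (forall e, E e -> pi e = e) ->
  (forall b h, pi (Lop b h) = Lop b (pi h)) -> (forall a h, pi (Rop a h) = Rop a (pi h)) ->
  subcoalg K G F tr tau [set h | D h /\ pi h = (fun _ => 0)].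
Proof.
move=> [fD [cD HD]] ED Hl Hin Hid HL HR.
have qD : forall a, D a -> [set h | D h /\ pi h = (fun _ => 0)] (fun z => a z - pi a z).
  move=> a Da; rewrite (_ : (fun z => a z - pi a z) = fun z => -1 * pi a z + a z); last first.
    by apply: funext => z; rewrite mulN1r addrC.
  split; first by apply: closed_lin => //; apply: ED; apply: Hin.
  rewrite Hl Hid ?Hin //; apply: funext => z; ring.
split; first by move=> h [Dh _]; apply: fD.
split.
  move=> h [n [c [w [Hw ->]]]]; split.
    by apply: cD; exists n, c, w; split => // i; case: (Hw i).
  rewrite (linb_sumL _ _ _ Hl); apply: funext => z; rewrite big1 // => i _.
  by case: (Hw i) => _ ->; rewrite mulr0.
move=> h [Dh ph0]; have := HD h Dh; rewrite DeltaHE => -[n [c [w [Hw Ew]]]].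
rewrite -(T2_D0 Hl ph0 HL HR) Ew (T2_sum _ _ Hl); apply: span_ord => i.
have [a [b [Da [Db ->]]]] := Hw i; rewrite T2_tens //.
exists (fun z => a z - pi a z), (fun z => b z - pi b z); split; [exact: qD | split; [exact: qD | by []]].
Qed.

Definition simples (D : set (T -> K)) : set (T -> K) :=
  [set h | exists D', simple_subcoalg K G F tr tau D' /\ D' `<=` D /\ D' h].

Lemma simples_mono D D' : D' `<=` D -> simples D' `<=` simples D.
Proof. by move=> sub h [D'' [s [sD h0]]]; exists D''; split => //; split => // x /sD /sub. Qed.

Lemma cs_step f D (M : 'M[K]_(size (Bl f))) : NG != 0 -> subcoalg K G F tr tau D -> D `<=` Cf f ->
  rep D M ->
  (forall D' (M' : 'M[K]_(size (Bl f))), subcoalg K G F tr tau D' -> D' `<=` D -> rep D' M' ->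
     (\rank M' < \rank M)%N -> D' `<=` Defs.span (simples D')) ->
  D `<=` Defs.span (simples D).
Proof.
move=> NGnz sD DC rD IH.
have cD : closed D by case: sD => _ [].
have [simD|nsim] := pselect (simple_subcoalg K G F tr tau D).
  by move=> h Dh; apply: span_sub; exists D; split; [|split] => // x.
have [[h0 [Dh0 nh0]]|none] := pselect (exists h, D h /\ h <> (fun _ => 0)); last first.
  move=> h Dh; have -> : h = (fun _ => 0) by apply: contra_notP none => nh; exists h.
  exact: span0.
have [E [sE [ED [E0 nED]]]] : exists E, subcoalg K G F tr tau E /\ E `<=` D /\
    E <> [set (fun _ => 0)] /\ E <> D.
  apply: contra_notP nsim => H; split => //; split; first by exists h0.
  move=> E sE ED; have [->|n0] := pselect (E = [set (fun _ => 0)]); first by left.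
  right; apply: contra_notP H => nED; by exists E.
have cE : closed E by case: sE => _ [].
have [e [Ee ne]] : exists e, E e /\ e <> (fun _ => 0).
  apply: contra_notP E0 => H; apply/seteqP; split => [u Eu|u /= ->]; last exact: closed0.
  by apply: contra_notP H => nu; exists u.
have [pi [Hl Hin Hid HL HR]] := complement sE ED DC NGnz.
have sD2 := D2_subcoalg sD ED Hl Hin Hid HL HR.
set D2 := [set h | D h /\ pi h = (fun _ => 0)] in sD2.
have D2D : D2 `<=` D by move=> h [].
have [ME rE] := @rep_ex f E cE.
have [M2 rD2] := @rep_ex f D2 (proj1 (proj2 sD2)).
have ltE := rep_lt rE rD ED DC nED.
have ltD2 : (\rank M2 < \rank M)%N.
  apply: (rep_lt rD2 rD D2D DC) => eq2.
  have : D2 e by rewrite eq2; apply: ED.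
  by move=> [_ pe]; apply: ne; rewrite -(Hid e Ee).
have spE := IH E ME sE ED rE ltE.
have spD2 := IH D2 M2 sD2 D2D rD2 ltD2.
move=> h Dh.
have -> : h = (fun z => pi h z + (h z - pi h z)) by apply: funext => z; rewrite addrC subrK.
apply: span_add.
  by apply: (span_mono (simples_mono ED)); apply: spE; apply: Hin.
apply: (span_mono (simples_mono D2D)); apply: spD2; split.
  rewrite (_ : (fun z => h z - pi h z) = fun z => -1 * pi h z + h z); last first.
    by apply: funext => z; rewrite mulN1r addrC.
  by apply: closed_lin => //; apply: ED; apply: Hin.
rewrite (_ : (fun z => h z - pi h z) = fun z => -1 * pi h z + h z); last first.
  by apply: funext => z; rewrite mulN1r addrC.
rewrite Hl Hid ?Hin //; apply: funext => z; ring.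
Qed.

Lemma cs_ind f (NGnz : NG != 0) k : forall D (M : 'M[K]_(size (Bl f))), subcoalg K G F tr tau D ->
  D `<=` Cf f -> rep D M -> (\rank M <= k)%N -> D `<=` Defs.span (simples D).
Proof.
elim: k => [|k IH] D M sD DC rD rk; apply: (cs_step NGnz sD DC rD) => D' M' sD' D'D rD' lt.
  by move: lt; rewrite leqn0 in rk; rewrite (eqP rk).
apply: (IH D' M') => //; first by move=> x /D'D /DC.
by rewrite -ltnS; apply: leq_trans lt rk.
Qed.

Lemma part1a f : NG != 0 -> cosemisimple_subcoalg K G F tr tau (Cf f).
Proof.
move=> NGnz; split; first exact: Cf_subcoalg.
have [M rM] := @rep_ex f (Cf f) (@Cf_closed f).
exact: (@cs_ind f NGnz _ (Cf f) M (Cf_subcoalg f) (fun x => id) rM (leqnn _)).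
Qed.

End Bic.

Unset Implicit Arguments.
Theorem lemma4p1
  (K : closedFieldType) (charK0 : [pchar K] =i pred0)
  (G : finGroupType) (F : groupType)
  (tr : G -> F -> F) (tl : G -> F -> G)
  (sigma : G -> F -> F -> K) (tau : G -> G -> F -> K)
  (* |> is a left action of G on the set F *)
  (tr1 : forall f, tr 1%g f = f)
  (trM : forall g g' f, tr (g * g')%g f = tr g (tr g' f))
  (* <| is a right action of F on the set G *)
  (tl1 : forall g, tl g 1%g = g)
  (tlM : forall g f f', tl g (f * f')%g = tl (tl g f) f')
  (* matched pair *)
  (mp1 : forall g f f', tr g (f * f')%g = (tr g f * tr (tl g f) f')%g)
  (mp2 : forall g g' f, tl (g * g')%g f = (tl g (tr g' f) * tl g' f)%g)
  (* sigma, tau take values in K^x *)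
  (sigma_nz : forall g f f', sigma g f f' != 0)
  (tau_nz : forall g g' f, tau g g' f != 0)
  (* normalisation *)
  (sigma_n : forall g f f', sigma g 1%g f = 1 /\ sigma g f 1%g = 1 /\ sigma 1%g f f' = 1)
  (tau_n : forall g g' f, tau 1%g g f = 1 /\ tau g 1%g f = 1 /\ tau g g' 1%g = 1)
  (* cocycle conditions *)
  (sigma_cocycle : forall g f f' f'',
     sigma (tl g f) f' f'' * sigma g f (f' * f'')%g = sigma g f f' * sigma g (f * f')%g f'')
  (tau_cocycle : forall g g' g'' f,
     tau g g' (tr g'' f) * tau (g * g')%g g'' f = tau g (g' * g'')%g f * tau g' g'' f)
  (* compatibility *)
  (sigma_tau : forall g g' f f',
     sigma (g * g')%g f f' * tau g g' (f * f')%g =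
     sigma g (tr g' f) (tr (tl g' f) f') * sigma g' f f' * tau g g' f
       * tau (tl g (tr g' f)) (tl g' f) f') :
  (* (1) *)
  (forall f : F, cosemisimple_subcoalg K G F tr tau (Cf K G F tr f)) /\
  hopf_subalg K G F tr tl sigma tau (Cf K G F tr 1%g) /\
  hopf_iso_kG K G F tr tl sigma tau /\
  (* (2) *)
  (forall f : F, (forall g : G, tr g f = f -> g = 1%g) ->
     simple_subcoalg K G F tr tau (Cf K G F tr f) /\
     ((SH K G F tr tl sigma tau) @` (Cf K G F tr f) = Cf K G F tr f <->
        exists g : G, tr g f = (f^-1)%g)).
Proof.
have NGnz : NG K G != 0.
  by rewrite /NG; move/pcharf0P: charK0 => ->; rewrite -lt0n; apply/card_gt0P; exists 1%g.
split; first by move=> f; apply: (part1a tr1 trM tau_nz tau_n tau_cocycle).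
split; first by apply: (part1b tau tr1 trM tl1 tlM mp1 mp2 sigma_n).
split; first by apply: (part1c tr1 trM tl1 tlM mp1 mp2 sigma_n tau_n).
move=> f hs; split; first by apply: (part2a tr1 trM tau_nz).
exact: (part2b tr1 trM tl1 tlM mp1 mp2 sigma_nz tau_nz f).
Qed.
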